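(* Let $k\ge 1$ be an integer and let $r=R(k,k+1)$ be the Ramsey number (the least $r$ such that every simple graph on at least $r$ vertices contains an independent set of size $k$ or a clique of size $k+1$). Then for every graph $G$ on at least $r$ vertices, $\lambda(G)\ge k$; consequently $\Lambda_n\ge k$ for all $n\ge r$. In particular (since $R(3,4)=9$), $\Lambda_n\ge 3$ for all $n\ge 9$.
   Context: All graphs are finite, simple and undirected. For a graph $G=(V,E)$ and $v\in V$, let $N_v$ be the neighbourhood of $v$; the local complementation $G^v$ is obtained by complementing the subgraph induced on $N_v$. The LC orbit $[G]$ is the set of graphs obtainable from $G$ by finite sequences of local complementations. $\alpha(G)$ is the independence number of $G$, $\lambda(G)=\max_{H\in[G]}\alpha(H)$, and $\Lambda_n$ is the minimum of $\lambda(G)$ over all graphs $G$ on $n$ vertices. *)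

(* Defs.v *)
From mathcomp Require Import all_boot.
Set Implicit Arguments. Unset Strict Implicit. Unset Printing Implicit Defensive.

(* A (possibly non-simple) graph on vertex set 'I_n, given by its set of
   ordered adjacent pairs. Simple graphs are those satisfying [simple_graph]. *)
Definition graph (n : nat) := {set 'I_n * 'I_n}.

Section Graphs.
Variable n : nat.
Implicit Types (G H : graph n) (S : {set 'I_n}).

Definition adj G (x y : 'I_n) : bool := (x, y) \in G.

Definition simple_graph G : bool :=
  [forall x, ~~ adj G x x] && [forall x, forall y, adj G x y == adj G y x].

Definition nbhd G (v : 'I_n) : {set 'I_n} := [set x | adj G v x].

Definition lc G (v : 'I_n) : graph n :=
  [set p : 'I_n * 'I_n |
    if [&& p.1 \in nbhd G v, p.2 \in nbhd G v & p.1 != p.2]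
    then ~~ adj G p.1 p.2 else adj G p.1 p.2].

Definition lc_step : rel (graph n) := fun G H => [exists v, H == lc G v].

Definition lc_orbit G : {set graph n} := [set H | connect lc_step G H].

Definition independent G S : bool :=
  [forall x in S, forall y in S, ~~ adj G x y].

Definition clique G S : bool :=
  [forall x in S, forall y in S, (x != y) ==> adj G x y].

Definition alpha G : nat := \max_(S : {set 'I_n} | independent G S) #|S|.

Definition lambda G : nat := \max_(H in lc_orbit G) alpha H.

End Graphs.

(* Lambda_n = min of lambda(G) over simple graphs G on n vertices
   (the empty graph exists, and lambda G <= n, so the default n is harmless) *)
Definition Lambda (n : nat) : nat :=
  \big[minn/n]_(G : graph n | simple_graph G) lambda G.

Definition ramsey_prop (k l r : nat) : Prop :=
  forall m, r <= m -> forall G : graph m, simple_graph G ->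
    exists S : {set 'I_m},
      (independent G S && (#|S| == k)) || (clique G S && (#|S| == l)).

Definition is_ramsey_number (k l r : nat) : Prop :=
  ramsey_prop k l r /\ forall r', ramsey_prop k l r' -> r <= r'.

(* Main.v *)
Require Import Defs.
From mathcomp Require Import all_boot zify.
Set Implicit Arguments. Unset Strict Implicit. Unset Printing Implicit Defensive.

Lemma adj_irr n (G : graph n) x : simple_graph G -> ~~ adj G x x.
Proof. by case/andP => /forallP. Qed.
Lemma adj_sym n (G : graph n) x y : simple_graph G -> adj G x y = adj G y x.
Proof. by case/andP => _ /forallP /(_ x) /forallP /(_ y) /eqP. Qed.

Lemma clique_adj n (G : graph n) S x y : clique G S -> x \in S -> y \in S -> x != y -> adj G x y.
Proof. by move/forallP/(_ x)/implyP => h /h /forallP/(_ y)/implyP h2 /h2 /implyP. Qed.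

Lemma key n (G : graph n) k : simple_graph G ->
  (exists S : {set 'I_n}, (independent G S && (#|S| == k)) || (clique G S && (#|S| == k.+1))) ->
  k <= lambda G.
Proof.
move=> sG [S /orP[/andP[iS /eqP cS]|/andP[cS /eqP kS]]].
- apply: (@leq_trans (alpha G)).
  + by rewrite -cS /alpha; apply: (leq_bigmax_cond S).
  + rewrite /lambda; apply: (leq_bigmax_cond G).
    by rewrite /lc_orbit inE connect0.
- have: 0 < #|S| by rewrite kS.
  case/card_gt0P => v vS.
  pose T := S :\ v.
  have cT : #|T| = k by have := cardsD1 v S; rewrite vS kS add1n => -[].
  apply: (@leq_trans (alpha (lc G v))).
  + rewrite -cT; apply: (leq_bigmax_cond T).
    apply/forallP => x; apply/implyP; rewrite !inE => /andP[xv xS].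
    apply/forallP => y; apply/implyP; rewrite !inE => /andP[yv yS].
    have avx : adj G v x by apply: (clique_adj cS); rewrite // eq_sym.
    have avy : adj G v y by apply: (clique_adj cS); rewrite // eq_sym.
    rewrite /adj /lc inE /= -!/(adj G _ _) !inE avx avy /=.
    case: (eqVneq x y) => [->|xy] /=; first exact: adj_irr.
    by rewrite negbK (clique_adj cS).
  + apply: (leq_bigmax_cond (lc G v)). rewrite inE; apply: connect1.
    by apply/existsP; exists v.
Qed.

Lemma I3 n (G : graph n) a b c : simple_graph G ->
  a != b -> a != c -> b != c -> ~~ adj G a b -> ~~ adj G a c -> ~~ adj G b c ->
  independent G (a |: (b |: [set c])) && (#|a |: (b |: [set c])| == 3).
Proof.
move=> sG ab ac bc h1 h2 h3; apply/andP; split.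
- apply/forallP=> x; apply/implyP; rewrite !inE => hx; apply/forallP=> y; apply/implyP; rewrite !inE => hy.
  case/or3P: hx => /eqP->; case/or3P: hy => /eqP->;
  first [done | exact: adj_irr | by rewrite (adj_sym _ _ sG)].
- by rewrite !cardsU1 cards1 !inE (negbTE ab) (negbTE ac) (negbTE bc).
Qed.

Lemma K4 n (G : graph n) a b c d : simple_graph G ->
  a != b -> a != c -> a != d -> b != c -> b != d -> c != d ->
  adj G a b -> adj G a c -> adj G a d -> adj G b c -> adj G b d -> adj G c d ->
  exists S : {set 'I_n}, (independent G S && (#|S| == 3)) || (clique G S && (#|S| == 4)).
Proof.
move=> sG ab ac ad bc bd cd h1 h2 h3 h4 h5 h6; exists (a |: (b |: (c |: [set d]))).
apply/orP; right; apply/andP; split.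
- apply/forallP=> x; apply/implyP; rewrite !inE => hx; apply/forallP=> y; apply/implyP; rewrite !inE => hy.
  apply/implyP => xy.
  case/or4P: hx xy => /eqP->; case/or4P: hy => /eqP-> xy;
  first [done | by rewrite eqxx in xy | by rewrite (adj_sym _ _ sG)].
- by rewrite !cardsU1 cards1 !inE (negbTE ab) (negbTE ac) (negbTE ad) (negbTE bc) (negbTE bd) (negbTE cd).
Qed.

Lemma pick_elt (T : finType) (A : {set T}) m : m.+1 <= #|A| -> exists a, a \in A /\ m <= #|A :\ a|.
Proof.
move=> h; have /card_gt0P [a aA] : 0 < #|A| by apply: leq_trans h.
by exists a; split=> //; move: h; rewrite (cardsD1 a A) aA add1n ltnS.
Qed.

Lemma pick3 (T : finType) (A : {set T}) : 3 <= #|A| ->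
  exists a b c, [/\ a \in A, b \in A, c \in A & [/\ a != b, a != c & b != c]].
Proof.
move=> /pick_elt [a [aA /pick_elt [b [bA /pick_elt [c [cA _]]]]]].
move: bA cA; rewrite !inE => /andP[ba bA] /andP[cb /andP[ca cA]].
by exists a, b, c; split=> //; split=> //; rewrite eq_sym.
Qed.

Lemma pick4 (T : finType) (A : {set T}) : 4 <= #|A| ->
  exists a b c d, [/\ a \in A, b \in A, c \in A & d \in A] /\
     [/\ a != b, a != c & a != d] /\ [/\ b != c, b != d & c != d].
Proof.
move=> /pick_elt [a [aA /pick_elt [b [bA /pick_elt [c [cA /pick_elt [d [dA _]]]]]]]].
move: bA cA dA; rewrite !inE => /andP[ba bA] /andP[cb /andP[ca cA]] /andP[dc /andP[db /andP[da dA]]].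
by exists a, b, c, d; do !split=> //; rewrite eq_sym.
Qed.

Lemma sum_deg n (G : graph n) : \sum_v #|nbhd G v| = #|G|.
Proof.
rewrite -sum1_card big_mkcond /=.
rewrite (eq_bigr (fun v => \sum_w (if (v, w) \in G then 1 else 0))); last first.
  by move=> v _; rewrite -sum1_card big_mkcond /=; apply: eq_bigr => w _; rewrite /nbhd inE.
rewrite pair_big /= [RHS]big_mkcond /=; apply: eq_bigr => -[a b] _ //.
Qed.

Lemma even_G n (G : graph n) : simple_graph G -> ~~ odd #|G|.
Proof.
move=> sG.
pose B := [set p : 'I_n * 'I_n | p.1 < p.2].
pose sw := fun p : 'I_n * 'I_n => (p.2, p.1).
have swK : cancel sw sw by case.
have E : G :\: B = sw @: (G :&: B).
  apply/setP => -[x y]; rewrite !inE /=.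
  apply/idP/imsetP.
  - case/andP => xyB xyG; exists (y, x); rewrite // !inE /=.
    have: x != y by apply/eqP => e; move: xyG; rewrite e; apply/negP; exact: adj_irr.
    move=> ne; rewrite -[(y,x) \in G]/(adj G y x) -(adj_sym x y sG) [adj _ _ _]xyG /=.
    by rewrite ltn_neqAle eq_sym ne leqNgt.
  - case=> -[a b]; rewrite !inE /= => /andP[abG ab] [-> ->].
    rewrite -[(b,a) \in G]/(adj G b a) -(adj_sym a b sG) /adj abG andbT.
    by rewrite -leqNgt ltnW.
have := cardsID B G; rewrite E card_imset; last exact: can_inj swK.
by move <-; rewrite addnn odd_double.
Qed.

Lemma R34 n (G : graph n) : 9 <= n -> simple_graph G ->
  exists S : {set 'I_n}, (independent G S && (#|S| == 3)) || (clique G S && (#|S| == 4)).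
Proof.
move=> n9 sG.
case: (boolP [exists S : {set 'I_n}, independent G S && (#|S| == 3)]) => [/existsP [S hS]|noI].
  by exists S; rewrite hS.
have noind : forall x y z, x != y -> x != z -> y != z -> ~~ adj G x y -> ~~ adj G x z -> adj G y z.
  move=> x y z xy xz yz axy axz; apply/negPn/negP => ayz; move/negP: noI; apply; apply/existsP.
  by exists (x |: (y |: [set z])); apply: I3.
have nbN v y : adj G v y -> v != y.
  by apply: contraTneq => ->; apply: adj_irr.
pose M v := [set y | (y != v) && ~~ adj G v y].
have cardNM v : #|nbhd G v| + (1 + #|M v|) = n.
  have E : ~: nbhd G v = v |: M v.
    apply/setP => y; rewrite !inE; case: (eqVneq y v) => [->|] /=; first by rewrite adj_irr.
    done.
  by have := cardsC (nbhd G v); rewrite E cardsU1 !inE eqxx card_ord.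
case: (boolP [exists v, 4 <= #|M v|]) => [/existsP [v /pick4 [a [b [c [d]]]]]|noM].
  rewrite !inE => -[[/andP[av va] /andP[bv vb] /andP[cv vc] /andP[dv vd]] [[ab ac ad] [bc bd cd]]].
  by apply: (K4 sG ab ac ad bc bd cd); apply: (noind v); rewrite // eq_sym.
have Msmall v : #|M v| <= 3.
  by move/existsPn: noM => /(_ v); rewrite -ltnNge ltnS.
case: (boolP [exists v, 6 <= #|nbhd G v|]) => [/existsP [v /pick_elt [u [uN]]]|noN].
  pose P := [set y | adj G u y].
  have := cardsID P (nbhd G v :\ u) => cID hc.
  case: (leqP 3 #|(nbhd G v :\ u) :&: P|) => hA.
  - case/pick3: hA => [a [b [c []]]]; rewrite !inE.
    move=> /andP[/andP[au av] ua] /andP[/andP[bu bv] ub] /andP[/andP[cu cv] uc] [ab ac bc].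
    move: uN; rewrite inE => uN; have vu := nbN _ _ uN.
    have va := nbN _ _ av; have vb := nbN _ _ bv; have vc := nbN _ _ cv.
    case: (boolP (adj G a b)) => hab.
      by apply: (K4 sG vu va vb) => //; rewrite eq_sym.
    case: (boolP (adj G a c)) => hac.
      by apply: (K4 sG vu va vc) => //; rewrite eq_sym.
    case: (boolP (adj G b c)) => hbc.
      by apply: (K4 sG vu vb vc) => //; rewrite eq_sym.
    by exfalso; move/negP: noI; apply; apply/existsP; exists (a |: (b |: [set c])); apply: I3.
  - have hB : 3 <= #|(nbhd G v :\ u) :\: P|.
      by rewrite -cID in hc; move: hc hA; set x := #|_ :&: P|; set y := #|_ :\: P|; lia.
    case/pick3: hB => [a [b [c []]]]; rewrite !inE.
    move=> /andP[ua /andP[au av]] /andP[ub /andP[bu bv]] /andP[uc /andP[cu cv]] [ab ac bc].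
    have va := nbN _ _ av; have vb := nbN _ _ bv; have vc := nbN _ _ cv.
    by apply: (K4 sG va vb vc) => //; apply: (noind u); rewrite // eq_sym.
have Nsmall v : #|nbhd G v| <= 5.
  by move/existsPn: noN => /(_ v); rewrite -ltnNge ltnS.
have v0 : 'I_n by apply: (@Ordinal n 0); lia.
have n9' : n = 9.
  by have := cardNM v0; have := Nsmall v0; have := Msmall v0; lia.
have N5 v : #|nbhd G v| = 5.
  by have := cardNM v; have := Nsmall v; have := Msmall v; lia.
have := even_G sG; rewrite -sum_deg (eq_bigr (fun _ => 5)) // sum_nat_const card_ord => h.
by exfalso; move: h; rewrite n9'.
Qed.

Lemma simple0 n : simple_graph (set0 : graph n).
Proof.
apply/andP; split; apply/forallP => x; first by rewrite /adj inE.
by apply/forallP => y; rewrite /adj !inE.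
Qed.

Theorem mainTheorem2 :
  (forall k r : nat, 1 <= k -> is_ramsey_number k k.+1 r ->
     (forall n, r <= n -> forall G : graph n, simple_graph G -> k <= lambda G)
     /\ (forall n, r <= n -> k <= Lambda n))
  /\ (forall n, 9 <= n -> 3 <= Lambda n).
Proof.
split.
- move=> k r hk [rp _].
  have p1 : forall n, r <= n -> forall G : graph n, simple_graph G -> k <= lambda G.
    by move=> n rn G sG; apply: key => //; apply: rp.
  split=> // n rn; rewrite /Lambda; apply: (big_ind (fun x => k <= x)).
  + have [S /orP[/andP[_ /eqP <-]|/andP[_ /eqP hS]]] := rp n rn _ (simple0 n).
      by apply: leq_trans (max_card S) _; rewrite card_ord.
    apply: (@leq_trans #|S|); first by rewrite hS.
    by apply: leq_trans (max_card S) _; rewrite card_ord.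
  + by move=> x y hx hy; rewrite leq_min hx hy.
  + by move=> G sG; apply: p1.
- move=> n n9; rewrite /Lambda; apply: (big_ind (fun x => 3 <= x)).
  + exact: leq_trans n9.
  + by move=> x y hx hy; rewrite leq_min hx hy.
  + by move=> G sG; apply: key => //; apply: R34.
Qed.
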